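(* Let $f:[0,1]\to[0,1]$ be a continuous surjective function that does not admit a splitting sequence. If $f$ admits a fixed point $d$ that is S-type, M-type or W-type, then $$\varprojlim f=\varprojlim([0,d],f|_{[0,d]})\cup\varprojlim([d,1],f|_{[d,1]})$$ and $$\varprojlim([0,d],f|_{[0,d]})\cap\varprojlim([d,1],f|_{[d,1]})=\{(d,d,\dots)\}.$$
   Context: $\varprojlim f=\{\mathbf x=(x_0,x_1,\dots)\in[0,1]^{\mathbb N}: f(x_{n+1})=x_n\ \forall n\}$; for a closed interval $J\subseteq[0,1]$, $\varprojlim(J,f|_J)=\{\mathbf x\in\varprojlim f: x_n\in J\ \forall n\}$. Fixed-point types: let $c<d<e$ in $[0,1]$ with $d$ a fixed point, $d$ the only fixed point in $(c,e)$, $c=0$ or $c$ a fixed point, and $e=1$ or $e$ a fixed point. Then $d$ is S-type if $f(x)\le x$ for all $x\in[c,d]$ and $f(x)\ge x$ for all $x\in[d,e]$; N-type if $f(x)\ge x$ on $[c,d]$ and $f(x)\le x$ on $[d,e]$; M-type if $f(x)\ge x$ for all $x\in[c,e]$; W-type if $f(x)\le x$ for all $x\in[c,e]$. (The type is witnessed by $(c,e)$; $d$ has a given type if such $c,e$ exist.) A sequence $(T_n)_{n\in\mathbb N}$ of closed intervals $T_n\subsetneq[0,1]$ (possibly degenerate) is tight if $f(T_{n+1})=T_n$ for every $n$ and $T_n$ is nondegenerate for all sufficiently large $n$. A tight sequence $(T_n)$, $T_n=[l_n,r_n]$, is a splitting sequence admitted by $f$ if there are an infinite set $N\subseteq\mathbb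 N$ and nondegenerate closed intervals $S_n\subseteq[0,1]$ ($n\in N$) with $S_n\cap T_n\subseteq\{l_n,r_n\}$ and $f(S_n)=f(T_n)$ for all $n\in N$. *)

(* Defs.v *)
(* functions [0,1] -> [0,1] represented as f : R -> R,
   only values on [0,1] matter. *)
From Stdlib Require Import Reals.
Open Scope R_scope.

Definition in01 (x : R) : Prop := 0 <= x <= 1.

Definition maps01 (f : R -> R) : Prop := forall x, in01 x -> in01 (f x).

Definition cont01 (f : R -> R) : Prop :=
  forall x, in01 x -> forall eps, 0 < eps ->
    exists delta, 0 < delta /\
      forall y, in01 y -> Rabs (y - x) < delta -> Rabs (f y - f x) < eps.

Definition surj01 (f : R -> R) : Prop :=
  forall y, in01 y -> exists x, in01 x /\ f x = y.

Definition invlim (f : R -> R) (x : nat -> R) : Prop :=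
  (forall n, in01 (x n)) /\ (forall n, f (x (S n)) = x n).

Definition invlim_on (f : R -> R) (a b : R) (x : nat -> R) : Prop :=
  invlim f x /\ (forall n, a <= x n <= b).

Definition is_fixed (f : R -> R) (d : R) : Prop := f d = d.

Definition type_frame (f : R -> R) (c d e : R) : Prop :=
  0 <= c /\ c < d /\ d < e /\ e <= 1 /\ is_fixed f d /\
  (forall x, c < x < e -> is_fixed f x -> x = d) /\
  (c = 0 \/ is_fixed f c) /\ (e = 1 \/ is_fixed f e).

Definition S_type (f : R -> R) (d : R) : Prop :=
  exists c e, type_frame f c d e /\
    (forall x, c <= x <= d -> f x <= x) /\ (forall x, d <= x <= e -> x <= f x).

Definition N_type (f : R -> R) (d : R) : Prop :=
  exists c e, type_frame f c d e /\
    (forall x, c <= x <= d -> x <= f x) /\ (forall x, d <= x <= e -> f x <= x).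

Definition M_type (f : R -> R) (d : R) : Prop :=
  exists c e, type_frame f c d e /\ (forall x, c <= x <= e -> x <= f x).

Definition W_type (f : R -> R) (d : R) : Prop :=
  exists c e, type_frame f c d e /\ (forall x, c <= x <= e -> f x <= x).

Definition image_eq (f : R -> R) (a b c d : R) : Prop :=
  forall y, c <= y <= d <-> exists x, a <= x <= b /\ f x = y.

(* T_n = [l n, r n]: closed subintervals of [0,1] (possibly degenerate),
   proper subsets of [0,1] *)
Definition tight (f : R -> R) (l r : nat -> R) : Prop :=
  (forall n, 0 <= l n /\ l n <= r n /\ r n <= 1) /\
  (forall n, ~ (l n = 0 /\ r n = 1)) /\
  (forall n, image_eq f (l (S n)) (r (S n)) (l n) (r n)) /\
  (exists N, forall n, (N <= n)%nat -> l n < r n).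

Definition infinite_nat (P : nat -> Prop) : Prop :=
  forall m, exists n, (m <= n)%nat /\ P n.

(* S_n = [sl n, sr n] for n in the infinite set P *)
Definition splitting (f : R -> R) (l r : nat -> R) : Prop :=
  tight f l r /\
  exists (P : nat -> Prop) (sl sr : nat -> R), infinite_nat P /\
    forall n, P n ->
      (0 <= sl n /\ sl n < sr n /\ sr n <= 1) /\
      (forall x, sl n <= x <= sr n -> l n <= x <= r n -> x = l n \/ x = r n) /\
      (forall y, (exists x, sl n <= x <= sr n /\ f x = y) <->
                 (exists x, l n <= x <= r n /\ f x = y)).

Definition admits_splitting (f : R -> R) : Prop :=
  exists l r, splitting f l r.

(* Main.v *)
Require Import Defs.
From Stdlib Require Import Reals Lra Lia Classical IndefiniteDescription FunctionalExtensionality.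
Open Scope R_scope.

Lemma first_hit f a b al : cont01 f -> 0 <= a -> a <= b -> b <= 1 ->
  f a <= al -> al <= f b ->
  exists y, a <= y <= b /\ f y = al /\ forall z, a <= z < y -> f z < al.
Proof.
  intros Hc H0a Hab Hb1 Ha Hb.
  destruct (Req_dec (f a) al) as [E|NE].
  { exists a; split; [lra|split; [exact E| intros; lra]]. }
  set (E := fun z => a <= z <= b /\ forall w, a <= w <= z -> f w < al).
  assert (Hbd : bound E). { exists b; intros z [Hz _]; lra. }
  assert (HEa : exists z, E z).
  { exists a; split; [lra|]; intros w Hw; replace w with a by lra; lra. }
  destruct (completeness E Hbd HEa) as [y [Hub Hlub]].
  assert (Hay : a <= y) by (apply Hub; destruct HEa; split; [lra|intros w Hw; replace w with a by lra; lra]).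
  assert (Hyb : y <= b) by (apply Hlub; intros z [Hz _]; lra).
  assert (C1 : forall z, a <= z < y -> f z < al).
  { intros z Hz. destruct (Rlt_or_le (f z) al) as [L|L]; [exact L|].
    exfalso. assert (y <= z); [|lra]. apply Hlub. intros w [Hw Hw2].
    destruct (Rle_or_lt w z) as [L2|L2]; [exact L2|].
    specialize (Hw2 z ltac:(lra)); lra. }
  exists y; split; [lra|split; [|exact C1]].
  destruct (Rtotal_order (f y) al) as [L|[L|L]]; [exfalso| exact L | exfalso].
  - destruct (Req_dec y b) as [Eyb|Nyb]; [subst y; lra|].
    destruct (Hc y ltac:(unfold in01; lra) (al - f y) ltac:(lra)) as [dl [Hdl Hd]].
    set (z := Rmin (y + dl/2) b).
    assert (Hz1 : y < z) by (unfold z, Rmin; destruct Rle_dec; lra).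
    assert (Hz2 : z <= y + dl/2) by (unfold z, Rmin; destruct Rle_dec; lra).
    assert (Hz3 : z <= b) by (unfold z, Rmin; destruct Rle_dec; lra).
    assert (E z).
    { split; [lra|]. intros w Hw. destruct (Rlt_or_le w y) as [L2|L2].
      - apply C1; lra.
      - assert (Rabs (w - y) < dl) by (apply Rabs_def1; lra).
        specialize (Hd w ltac:(unfold in01; lra) H).
        apply Rabs_def2 in Hd. lra. }
    specialize (Hub z H). lra.
  - destruct (Req_dec y a) as [Eya|Nya]; [subst y; lra|].
    destruct (Hc y ltac:(unfold in01; lra) (f y - al) ltac:(lra)) as [dl [Hdl Hd]].
    set (z := Rmax (y - dl/2) a).
    assert (Hz1 : z < y) by (unfold z, Rmax; destruct Rle_dec; lra).
    assert (Hz2 : y - dl/2 <= z) by (unfold z, Rmax; destruct Rle_dec; lra).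
    assert (Hz3 : a <= z) by (unfold z, Rmax; destruct Rle_dec; lra).
    assert (Rabs (z - y) < dl) by (apply Rabs_def1; lra).
    specialize (Hd z ltac:(unfold in01; lra) H). apply Rabs_def2 in Hd.
    specialize (C1 z ltac:(lra)). lra.
Qed.

Lemma cont01_neg f : cont01 f -> cont01 (fun x => - f x).
Proof.
  intros Hc x Hx eps He. destruct (Hc x Hx eps He) as [dl [Hdl Hd]].
  exists dl; split; [exact Hdl|]. intros y Hy Hyx.
  replace (- f y - - f x) with (- (f y - f x)) by ring. rewrite Rabs_Ropp. auto.
Qed.

Lemma cont01_refl f : cont01 f -> cont01 (fun x => f (1 - x)).
Proof.
  intros Hc x Hx eps He. destruct (Hc (1 - x) ltac:(unfold in01 in *; lra) eps He) as [dl [Hdl Hd]].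
  exists dl; split; [exact Hdl|]. intros y Hy Hyx.
  apply Hd; [unfold in01 in *; lra|].
  replace (1 - y - (1 - x)) with (- (y - x)) by ring. rewrite Rabs_Ropp. auto.
Qed.

Lemma last_hit_above f a b al : cont01 f -> 0 <= a -> a <= b -> b <= 1 ->
  f a <= al -> al <= f b ->
  exists y, a <= y <= b /\ f y = al /\ forall z, y < z <= b -> al < f z.
Proof.
  intros Hc H0a Hab Hb1 Ha Hb.
  pose proof (cont01_neg _ (cont01_refl _ Hc)) as Hh.
  destruct (first_hit _ (1 - b) (1 - a) (- al) Hh) as [y [Hy [Hfy Hz]]];
    try lra; simpl; try (replace (1 - (1 - b)) with b by ring); try (replace (1 - (1 - a)) with a by ring); try lra.
  exists (1 - y); split; [lra|split; [simpl in Hfy; lra|]].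
  intros z Hz'. specialize (Hz (1 - z) ltac:(lra)). simpl in Hz.
  replace (1 - (1 - z)) with z in Hz by ring. lra.
Qed.

Lemma ivt_up f a b al : cont01 f -> 0 <= a -> a <= b -> b <= 1 ->
  f a <= al -> al <= f b -> exists x, a <= x <= b /\ f x = al.
Proof.
  intros. destruct (first_hit f a b al) as [y [? [? _]]]; auto. eauto.
Qed.

Lemma eximg_up f a b al be : cont01 f -> 0 <= a -> a <= b -> b <= 1 ->
  f a <= al -> al < be -> be <= f b ->
  exists s0 s1, a <= s0 /\ s0 < s1 /\ s1 <= b /\
    forall y, al <= y <= be <-> exists x, s0 <= x <= s1 /\ f x = y.
Proof.
  intros Hc H0a Hab Hb1 Ha Hab' Hb.
  destruct (first_hit f a b be) as [y1 [Hy1 [Hfy1 Hb1']]]; auto; try lra.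
  destruct (last_hit_above f a y1 al) as [y0 [Hy0 [Hfy0 Ha0]]]; auto; try lra.
  assert (y0 <> y1) by (intro; subst; lra).
  exists y0, y1; split; [lra|split; [lra|split; [lra|]]].
  intro y; split.
  - intros Hy. apply ivt_up; auto; lra.
  - intros [x [Hx Hfx]]. subst y. split.
    + destruct (Req_dec x y0); [subst; lra|]. assert (L := Ha0 x ltac:(lra)). lra.
    + destruct (Req_dec x y1); [subst; lra|]. assert (L := Hb1' x ltac:(lra)). lra.
Qed.

Lemma eximg_dn f a b al be : cont01 f -> 0 <= a -> a <= b -> b <= 1 ->
  f b <= al -> al < be -> be <= f a ->
  exists s0 s1, a <= s0 /\ s0 < s1 /\ s1 <= b /\
    forall y, al <= y <= be <-> exists x, s0 <= x <= s1 /\ f x = y.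
Proof.
  intros Hc H0a Hab Hb1 Ha Hab' Hb.
  destruct (eximg_up (fun x => f (1 - x)) (1 - b) (1 - a) al be (cont01_refl _ Hc))
    as [s0 [s1 [H1 [H2 [H3 H4]]]]]; try lra; simpl;
    try (replace (1 - (1 - b)) with b by ring); try (replace (1 - (1 - a)) with a by ring); try lra.
  exists (1 - s1), (1 - s0); split; [lra|split; [lra|split; [lra|]]].
  intro y; rewrite H4; split; intros [x [Hx Hfx]].
  - exists (1 - x); split; [lra|exact Hfx].
  - exists (1 - x); split; [lra|]. replace (1 - (1 - x)) with x by ring. exact Hfx.
Qed.

Fixpoint iseq (F : R -> R) (t0 : R) (n : nat) : R :=
  match n with O => t0 | S n => F (iseq F t0 n) end.

Lemma right_split f d t0 : cont01 f -> 0 < d -> d < t0 -> t0 <= 1 -> f d = d ->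
  (forall x, d <= x <= t0 -> x <= f x) ->
  (exists a b, 0 <= a /\ a <= b /\ b <= 1 /\ (t0 <= a \/ b <= d) /\
     ((f a <= d /\ t0 <= f b) \/ (t0 <= f a /\ f b <= d))) ->
  admits_splitting f.
Proof.
  intros Hc Hd0 Hdt Ht1 Hfd Hup [a [b [Ha0 [Hab [Hb1 [Hpos Hval]]]]]].
  assert (step : forall t, exists y, d < t <= t0 -> d < y <= t /\ image_eq f d y d t).
  { intro t. destruct (classic (d < t <= t0)) as [Ht|Ht]; [|exists 0; tauto].
    destruct (first_hit f d t t) as [y [Hy [Hfy Hlt]]]; auto; try lra.
    { apply Hup; lra. }
    exists y; intros _.
    assert (y <> d) by (intro; subst; lra).
    split; [lra|]. intro w; split.
    - intro Hw. apply ivt_up; auto; lra.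
    - intros [x [Hx Hfx]]; subst w. split.
      + assert (x <= f x) by (apply Hup; lra). lra.
      + destruct (Req_dec x y); [subst; lra|]. assert (L := Hlt x ltac:(lra)). lra. }
  set (F := fun t => proj1_sig (constructive_indefinite_description _ (step t))).
  assert (HF : forall t, d < t <= t0 -> d < F t <= t /\ image_eq f d (F t) d t).
  { intros t Ht. unfold F. destruct constructive_indefinite_description as [y Hy]. simpl. auto. }
  assert (Inv : forall n, d < iseq F t0 n <= t0).
  { induction n; simpl; [lra|]. destruct (HF _ IHn). lra. }
  assert (spl : forall n, exists p : R * R, a <= fst p /\ fst p < snd p /\ snd p <= b /\
     forall y, d <= y <= iseq F t0 n <-> exists x, fst p <= x <= snd p /\ f x = y).
  { intro n. specialize (Inv n).
    destruct Hval as [[H1 H2]|[H1 H2]].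
    - destruct (eximg_up f a b d (iseq F t0 n)) as [s0 [s1 Hs]]; auto; try lra.
      exists (s0, s1); exact Hs.
    - destruct (eximg_dn f a b d (iseq F t0 n)) as [s0 [s1 Hs]]; auto; try lra.
      exists (s0, s1); exact Hs. }
  set (G := fun n => proj1_sig (constructive_indefinite_description _ (spl n))).
  assert (HG : forall n, a <= fst (G n) /\ fst (G n) < snd (G n) /\ snd (G n) <= b /\
     forall y, d <= y <= iseq F t0 n <-> exists x, fst (G n) <= x <= snd (G n) /\ f x = y).
  { intro n. unfold G. destruct constructive_indefinite_description as [p Hp]. simpl. auto. }
  exists (fun _ => d), (fun n => iseq F t0 (S n)). split.
  - split; [|split; [|split]].
    + intro n. pose proof (Inv (S n)). lra.
    + intros n [H _]. lra.
    + intro n. simpl. apply HF. apply (Inv (S n)).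
    + exists O. intros n _. apply (Inv (S n)).
  - exists (fun _ => True), (fun n => fst (G n)), (fun n => snd (G n)).
    split; [intro m; exists m; split; auto|].
    intros n _. destruct (HG n) as [G1 [G2 [G3 G4]]]. pose proof (Inv (S n)) as In.
    split; [lra|split].
    + intros x Hx Hx'. destruct Hpos; [right|left]; lra.
    + intro y. rewrite <- G4. simpl. destruct (HF _ (Inv n)) as [_ Him]. apply Him.
Qed.

Lemma left_split f d t0 : cont01 f -> 0 <= t0 -> t0 < d -> d < 1 -> f d = d ->
  (forall x, t0 <= x <= d -> f x <= x) ->
  (exists a b, 0 <= a /\ a <= b /\ b <= 1 /\ (b <= t0 \/ d <= a) /\
     ((f a <= t0 /\ d <= f b) \/ (d <= f a /\ f b <= t0))) ->
  admits_splitting f.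
Proof.
  intros Hc Hd0 Hdt Ht1 Hfd Hdn [a [b [Ha0 [Hab [Hb1 [Hpos Hval]]]]]].
  assert (step : forall t, exists y, t0 <= t < d -> t <= y < d /\ image_eq f y d t d).
  { intro t. destruct (classic (t0 <= t < d)) as [Ht|Ht]; [|exists 0; tauto].
    destruct (last_hit_above f t d t) as [y [Hy [Hfy Hlt]]]; auto; try lra.
    { apply Hdn; lra. }
    exists y; intros _.
    assert (y <> d) by (intro; subst; lra).
    split; [lra|]. intro w; split.
    - intro Hw. apply ivt_up; auto; lra.
    - intros [x [Hx Hfx]]; subst w. split.
      + destruct (Req_dec x y); [subst; lra|]. assert (L := Hlt x ltac:(lra)). lra.
      + assert (f x <= x) by (apply Hdn; lra). lra. }
  set (F := fun t => proj1_sig (constructive_indefinite_description _ (step t))).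
  assert (HF : forall t, t0 <= t < d -> t <= F t < d /\ image_eq f (F t) d t d).
  { intros t Ht. unfold F. destruct constructive_indefinite_description as [y Hy]. simpl. auto. }
  assert (Inv : forall n, t0 <= iseq F t0 n < d).
  { induction n; simpl; [lra|]. destruct (HF _ IHn). lra. }
  assert (spl : forall n, exists p : R * R, a <= fst p /\ fst p < snd p /\ snd p <= b /\
     forall y, iseq F t0 n <= y <= d <-> exists x, fst p <= x <= snd p /\ f x = y).
  { intro n. specialize (Inv n).
    destruct Hval as [[H1 H2]|[H1 H2]].
    - destruct (eximg_up f a b (iseq F t0 n) d) as [s0 [s1 Hs]]; auto; try lra.
      exists (s0, s1); exact Hs.
    - destruct (eximg_dn f a b (iseq F t0 n) d) as [s0 [s1 Hs]]; auto; try lra.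
      exists (s0, s1); exact Hs. }
  set (G := fun n => proj1_sig (constructive_indefinite_description _ (spl n))).
  assert (HG : forall n, a <= fst (G n) /\ fst (G n) < snd (G n) /\ snd (G n) <= b /\
     forall y, iseq F t0 n <= y <= d <-> exists x, fst (G n) <= x <= snd (G n) /\ f x = y).
  { intro n. unfold G. destruct constructive_indefinite_description as [p Hp]. simpl. auto. }
  exists (fun n => iseq F t0 (S n)), (fun _ => d). split.
  - split; [|split; [|split]].
    + intro n. pose proof (Inv (S n)). lra.
    + intros n [_ H]. lra.
    + intro n. simpl. apply HF. apply (Inv (S n)).
    + exists O. intros n _. apply (Inv (S n)).
  - exists (fun _ => True), (fun n => fst (G n)), (fun n => snd (G n)).
    split; [intro m; exists m; split; auto|].
    intros n _. destruct (HG n) as [G1 [G2 [G3 G4]]]. pose proof (Inv (S n)) as In.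
    split; [lra|split].
    + intros x Hx Hx'. destruct Hpos; [left|right]; lra.
    + intro y. rewrite <- G4. simpl. destruct (HF _ (Inv n)) as [_ Him]. apply Him.
Qed.

Lemma crossing_split f d u : cont01 f -> in01 u -> f d = d ->
  (S_type f d \/ M_type f d \/ W_type f d) ->
  ((d < u /\ f u < d) \/ (u < d /\ d < f u)) -> admits_splitting f.
Proof.
  intros Hc Hu Hfd Ht Hcr. unfold in01 in Hu.
  destruct Ht as [[c [e [Hfr [HL HR]]]]|[[c [e [Hfr HM]]]|[c [e [Hfr HW]]]]];
    destruct Hfr as [H0c [Hcd [Hde [He1 _]]]].
  - destruct Hcr as [[A1 A2]|[B1 B2]].
    + apply (left_split f d (Rmax (f u) c)); auto; try lra;
        try (unfold Rmax; destruct Rle_dec; lra).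
      * intros x Hx. apply HL. split; [|lra]. pose proof (Rmax_r (f u) c). lra.
      * exists d, u. repeat split; try lra. right. split; [lra|apply Rmax_l].
    + apply (right_split f d (Rmin (f u) e)); auto; try lra;
        try (unfold Rmin; destruct Rle_dec; lra).
      * intros x Hx. apply HR. split; [lra|]. pose proof (Rmin_r (f u) e). lra.
      * exists u, d. repeat split; try lra. right. split; [apply Rmin_l|lra].
  - destruct Hcr as [[A1 A2]|[B1 B2]].
    + assert (e < u).
      { destruct (Rlt_or_le e u) as [L|L]; auto. assert (u <= f u) by (apply HM; lra). lra. }
      apply (right_split f d e); auto; try lra.
      * intros x Hx. apply HM. lra.
      * exists e, u. repeat split; try lra. right. split; [apply HM; lra|lra].
    + apply (right_split f d (Rmin (f u) e)); auto; try lra;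
        try (unfold Rmin; destruct Rle_dec; lra).
      * intros x Hx. apply HM. split; [lra|]. pose proof (Rmin_r (f u) e). lra.
      * exists u, d. repeat split; try lra. right. split; [apply Rmin_l|lra].
  - destruct Hcr as [[A1 A2]|[B1 B2]].
    + apply (left_split f d (Rmax (f u) c)); auto; try lra;
        try (unfold Rmax; destruct Rle_dec; lra).
      * intros x Hx. apply HW. split; [|lra]. pose proof (Rmax_r (f u) c). lra.
      * exists d, u. repeat split; try lra. right. split; [lra|apply Rmax_l].
    + assert (u < c).
      { destruct (Rlt_or_le u c) as [L|L]; auto. assert (f u <= u) by (apply HW; lra). lra. }
      apply (left_split f d c); auto; try lra.
      * intros x Hx. apply HW. lra.
      * exists u, c. repeat split; try lra. right. split; [lra|apply HW; lra].
Qed.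

Lemma cross_ex f d (x : nat -> R) : (forall n, f (x (S n)) = x n) -> f d = d ->
  forall k n, ((d < x n /\ x (n + k)%nat < d) \/ (x n < d /\ d < x (n + k)%nat)) ->
  exists j, (d < x (S j) /\ f (x (S j)) < d) \/ (x (S j) < d /\ d < f (x (S j))).
Proof.
  intros Hx Hfd k. induction k; intros n H.
  - rewrite Nat.add_0_r in H. lra.
  - destruct (Rtotal_order (x (S n)) d) as [L|[L|L]].
    + destruct (Rlt_or_le d (x n)).
      * exists n. right; split; [|rewrite Hx]; lra.
      * apply (IHk (S n)). replace (S n + k)%nat with (n + S k)%nat by lia. lra.
    + exfalso. rewrite <- (Hx n), L, Hfd in H. lra.
    + destruct (Rlt_or_le (x n) d).
      * exists n. left; split; [|rewrite Hx]; lra.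
      * apply (IHk (S n)). replace (S n + k)%nat with (n + S k)%nat by lia. lra.
Qed.

Theorem lemma4p3 (f : R -> R) (d : R) :
  maps01 f -> cont01 f -> surj01 f -> ~ admits_splitting f ->
  in01 d -> is_fixed f d -> (S_type f d \/ M_type f d \/ W_type f d) ->
  (forall x, invlim f x <-> (invlim_on f 0 d x \/ invlim_on f d 1 x)) /\
  (forall x, (invlim_on f 0 d x /\ invlim_on f d 1 x) <-> x = (fun _ => d)).
Proof.
  intros Hm Hc Hs Hns Hd Hfd Ht. unfold is_fixed in Hfd. unfold in01 in Hd.
  split.
  - intro x; split.
    + intros Hx. destruct (classic (invlim_on f 0 d x)) as [H1|H1]; [left; exact H1|].
      destruct (classic (invlim_on f d 1 x)) as [H2|H2]; [right; exact H2|].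
      exfalso. destruct Hx as [Hin Hxs].
      assert (E1 : exists n, d < x n).
      { apply NNPP; intro N. apply H1. split; [split; auto|].
        intro n. split; [apply Hin|]. destruct (Rlt_or_le d (x n)); auto. exfalso; eauto. }
      assert (E2 : exists m, x m < d).
      { apply NNPP; intro N. apply H2. split; [split; auto|].
        intro n. split; [|apply Hin]. destruct (Rlt_or_le (x n) d); auto. exfalso; eauto. }
      destruct E1 as [n Hn], E2 as [m Hm'].
      assert (J : exists j, (d < x (S j) /\ f (x (S j)) < d) \/ (x (S j) < d /\ d < f (x (S j)))).
      { destruct (Nat.le_gt_cases n m).
        - apply (cross_ex f d x Hxs Hfd (m - n) n). left. replace (n + (m - n))%nat with m by lia. lra.
        - apply (cross_ex f d x Hxs Hfd (n - m) m). right. replace (m + (n - m))%nat with n by lia. lra. }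
      destruct J as [j Hj]. apply Hns.
      apply (crossing_split f d (x (S j))); auto.
    + intros [[H _]|[H _]]; exact H.
  - intro x; split.
    + intros [[_ H1] [_ H2]]. apply functional_extensionality; intro n.
      specialize (H1 n); specialize (H2 n). lra.
    + intros ->. split; (split; [split; [intro; unfold in01; lra| intro; exact Hfd]|intro; lra]).
Qed.
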